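(* Let $0<\mu<1$, $e=(1-\mu,0)$, $s=(-\mu,0)$ and $$V(q)=-\frac{\mu}{|q-e|}-\frac{1-\mu}{|q-s|}-\frac12|q|^2,\qquad q\in\mathbb{R}^2\setminus\{e,s\}.$$ Let $\ell_2,\ell_3$ be the collinear Lagrange points defined in the context, and let $c<\min\{V(\ell_2),V(\ell_3)\}$. Then the set of points $q$ in the bounded Hill's region $\mathfrak{K}_c^b$ at which $\frac{\partial V}{\partial q_2}(q)=0$ is exactly $\mathfrak{K}_c^b\cap\{q_2=0\}$.
   Context: The function $u(x)=V(x,0)$ is strictly concave on each of the intervals $(-\infty,-\mu)$, $(-\mu,1-\mu)$, $(1-\mu,\infty)$ and tends to $-\infty$ at their endpoints. Its unique maxima on these intervals are denoted $\ell_3<-\mu$, $\ell_1\in(-\mu,1-\mu)$ and $\ell_2>1-\mu$ (as points $(\ell_i,0)$). They are critical points of $V$ with $V(\ell_1)<V(\ell_2)$ and $V(\ell_1)<V(\ell_3)$. The Hill's region is $\mathfrak{K}_c=\{q\in\mathbb{R}^2\setminus\{e,s\}:V(q)\le c\}$. For $c<\min\{V(\ell_2),V(\ell_3)\}$ it consists of one unbounded connected component and a bounded part $\mathfrak{K}_c^b$, the union of the bounded components. This bounded part is a single component containing $e,s$ in its closure if $c\ge V(\ell_1)$, and two components, one around each primary, if $c<V(\ell_1)$. *)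

(* Defs.v *)
From HB Require Import structures.
From mathcomp Require Import all_boot all_order all_algebra.
From mathcomp Require Import all_classical all_reals all_analysis.
Set Implicit Arguments. Unset Strict Implicit. Unset Printing Implicit Defensive.
Import Order.TTheory GRing.Theory Num.Theory.
Local Open Scope classical_set_scope.
Local Open Scope ring_scope.

Section Defs.
Variable R : realType.

Definition prim_e (mu : R) : R * R := (1 - mu, 0).
Definition prim_s (mu : R) : R * R := (- mu, 0).

Definition enorm (q : R * R) : R := Num.sqrt (q.1 ^+ 2 + q.2 ^+ 2).

Definition dist2 (p q : R * R) : R := enorm (p.1 - q.1, p.2 - q.2).

Definition V (mu : R) (q : R * R) : R :=
  - mu / dist2 q (prim_e mu) - (1 - mu) / dist2 q (prim_s mu)
  - 2^-1 * (enorm q) ^+ 2.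

Definition u (mu : R) (x : R) : R := V mu (x, 0).

Definition hill (mu c : R) : set (R * R) :=
  [set q | q <> prim_e mu /\ q <> prim_s mu /\ V mu q <= c].

Definition bounded2 (A : set (R * R)) : Prop :=
  exists M : R, forall p, A p -> `|p.1| <= M /\ `|p.2| <= M.

Definition hill_bounded (mu c : R) : set (R * R) :=
  [set q | hill mu c q /\ bounded2 (@connected_component (prod R^o R^o) (hill mu c) q)].

Definition dV_dq2 (mu : R) (q : R * R) : R :=
  derive1 (fun t : R => V mu (q.1, t)) q.2.

Definition is_l2 (mu l2 : R) : Prop :=
  1 - mu < l2 /\ forall x, 1 - mu < x -> u mu x <= u mu l2.

Definition is_l3 (mu l3 : R) : Prop :=
  l3 < - mu /\ forall x, x < - mu -> u mu x <= u mu l3.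

End Defs.

(* Main.v *)
Require Import Defs.
From HB Require Import structures.
From mathcomp Require Import all_boot all_order all_algebra.
From mathcomp Require Import all_classical all_reals all_analysis.
From mathcomp Require Import ring lra.
Import Order.TTheory GRing.Theory Num.Theory.
Local Open Scope classical_set_scope.
Local Open Scope ring_scope.

Section S.
Variable R : realType.

Lemma d_sq (A t : R) : is_derive t 1 (fun s : R => A + s ^+ 2) (2 * t).
Proof.
apply: is_derive_eq.
rewrite add0r mul1r; change (t * 1 + t * 1 = 2 * t); ring.
Qed.

Lemma d_invsqrt (A t : R) : 0 < A + t ^+ 2 ->
  is_derive t 1 (fun s : R => (Num.sqrt (A + s ^+ 2))^-1)
     (- t / (Num.sqrt (A + t ^+ 2)) ^+ 3).
Proof.
move=> hp.
have hs := @is_derive1_sqrt R _ hp.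
have hc := @is_derive1_comp R Num.sqrt (fun s : R => A + s ^+ 2) t _ _ hs (d_sq A t).
have hne : (Num.sqrt \o (fun s : R => A + s ^+ 2)) t != 0.
  by rewrite /= gt_eqF // sqrtr_gt0.
have := is_deriveV hne hc.
move=> H.
set r := Num.sqrt (A + t ^+ 2).
have r0 : r != 0 by rewrite gt_eqF // sqrtr_gt0.
have -> : - t / r ^+ 3 = - r ^- 2 * ((2 * r)^-1 * (2 * t)).
  by field; rewrite r0.
exact: H.
Qed.
Definition gV (mu x t : R) : R :=
  - mu * (Num.sqrt ((x - (1 - mu)) ^+ 2 + t ^+ 2))^-1
  - (1 - mu) * (Num.sqrt ((x - - mu) ^+ 2 + t ^+ 2))^-1
  - 2^-1 * (x ^+ 2 + t ^+ 2).

Lemma V_eq (mu x t : R) : V mu (x, t) = gV mu x t.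
Proof.
rewrite /V /gV /dist2 /enorm /prim_e /prim_s /= subr0 sqr_sqrtr; last first.
  by rewrite addr_ge0 // sqr_ge0.
by rewrite !mulNr.
Qed.

Lemma dV_eq (mu x t : R) : 0 < (x - (1 - mu)) ^+ 2 + t ^+ 2 ->
  0 < (x - - mu) ^+ 2 + t ^+ 2 ->
  dV_dq2 mu (x, t) = t * (mu / (Num.sqrt ((x - (1 - mu)) ^+ 2 + t ^+ 2)) ^+ 3
      + (1 - mu) / (Num.sqrt ((x - - mu) ^+ 2 + t ^+ 2)) ^+ 3 - 1).
Proof.
move=> ha hb.
rewrite /dV_dq2 /=.
have -> : (fun t0 : R => V mu (x, t0)) = gV mu x by apply/funext => s; exact: V_eq.
rewrite derive1E; apply: derive_val.
have h1 := d_invsqrt _ _ ha.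
have h2 := d_invsqrt _ _ hb.
rewrite /gV.
apply: is_derive_eq.
set ra := Num.sqrt ((x - (1 - mu)) ^+ 2 + t ^+ 2).
set rb := Num.sqrt ((x - - mu) ^+ 2 + t ^+ 2).
have ra0 : ra != 0 by rewrite gt_eqF // sqrtr_gt0.
have rb0 : rb != 0 by rewrite gt_eqF // sqrtr_gt0.
change (- mu * (- t / ra ^+ 3) - (1 - mu) * (- t / rb ^+ 3) - 2^-1 * ((0 + 1) * (t * 1 + t * 1)) =
  t * (mu / ra ^+ 3 + (1 - mu) / rb ^+ 3 - 1)).
by field; rewrite ?ra0 ?rb0 ?expf_neq0.
Qed.
Lemma inv_bound (r0 r : R) : 0 < r0 -> r0 <= r ->
  r0^-1 - r^-1 <= (r ^+ 2 - r0 ^+ 2) / (2 * r0 ^+ 3).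
Proof.
move=> h0 h1.
have r1 : 0 < r by apply: lt_le_trans h1.
have e : (r ^+ 2 - r0 ^+ 2) / (2 * r0 ^+ 3) - (r0^-1 - r^-1)
   = (r - r0) ^+ 2 * (r + 2 * r0) / (2 * r0 ^+ 3 * r).
  by field; rewrite ?gt_eqF ?lt0r_neq0 ?expf_neq0 ?mulf_neq0 ?gt_eqF.
rewrite -subr_ge0 e; apply: divr_ge0.
  apply: mulr_ge0; first exact: sqr_ge0.
  by apply: addr_ge0; [exact: ltW|apply: mulr_ge0; [|exact: ltW]].
by apply: mulr_ge0; [apply: mulr_ge0; [|apply: exprn_ge0; exact: ltW]|exact: ltW].
Qed.

Lemma gV_le (mu x t0 t : R) : 0 <= mu -> mu <= 1 ->
  0 < (x - (1 - mu)) ^+ 2 + t0 ^+ 2 -> 0 < (x - - mu) ^+ 2 + t0 ^+ 2 ->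
  t0 ^+ 2 <= t ^+ 2 ->
  mu / (Num.sqrt ((x - (1 - mu)) ^+ 2 + t0 ^+ 2)) ^+ 3
      + (1 - mu) / (Num.sqrt ((x - - mu) ^+ 2 + t0 ^+ 2)) ^+ 3 = 1 ->
  gV mu x t <= gV mu x t0.
Proof.
move=> m0 m1 ha hb htt hF.
set A := (x - (1 - mu)) ^+ 2 in ha hF *.
set B := (x - - mu) ^+ 2 in hb hF *.
have A0 : 0 <= A by exact: sqr_ge0.
have B0 : 0 <= B by exact: sqr_ge0.
set ra0 := Num.sqrt (A + t0 ^+ 2) in hF *.
set rb0 := Num.sqrt (B + t0 ^+ 2) in hF *.
set ra := Num.sqrt (A + t ^+ 2).
set rb := Num.sqrt (B + t ^+ 2).
have pa0 : 0 < ra0 by rewrite sqrtr_gt0.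
have pb0 : 0 < rb0 by rewrite sqrtr_gt0.
have la : ra0 <= ra by apply: ler_wsqrtr; rewrite lerD2l.
have lb : rb0 <= rb by apply: ler_wsqrtr; rewrite lerD2l.
have ea : ra ^+ 2 - ra0 ^+ 2 = t ^+ 2 - t0 ^+ 2.
  rewrite !sqr_sqrtr ?addr_ge0 ?sqr_ge0 //; ring.
have eb : rb ^+ 2 - rb0 ^+ 2 = t ^+ 2 - t0 ^+ 2.
  rewrite !sqr_sqrtr ?addr_ge0 ?sqr_ge0 //; ring.
have ia := inv_bound _ _ pa0 la. rewrite ea in ia.
have ib := inv_bound _ _ pb0 lb. rewrite eb in ib.
have ia' := ler_wpM2l m0 ia.
have m1' : 0 <= 1 - mu by rewrite subr_ge0.
have ib' := ler_wpM2l m1' ib.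
set D := t ^+ 2 - t0 ^+ 2 in ia ia' ib ib'.
have e : mu * (D / (2 * ra0 ^+ 3)) + (1 - mu) * (D / (2 * rb0 ^+ 3)) = D / 2.
  have -> : D / 2 = D / 2 * (mu / ra0 ^+ 3 + (1 - mu) / rb0 ^+ 3) by rewrite hF mulr1.
  by field; rewrite ?expf_neq0 ?gt_eqF.
rewrite /gV -/A -/B -/ra -/rb -/ra0 -/rb0.
have : D = t ^+ 2 - t0 ^+ 2 by [].
lra.
Qed.
End S.

Theorem lemma5p1 (R : realType) (mu l2 l3 c : R)
  (hmu0 : 0 < mu) (hmu1 : mu < 1)
  (hl2 : is_l2 mu l2) (hl3 : is_l3 mu l3)
  (hc : c < Num.min (V mu (l2, 0)) (V mu (l3, 0))) :
  [set q | hill_bounded mu c q /\ dV_dq2 mu q = 0]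
  = [set q | hill_bounded mu c q /\ q.2 = 0].
Proof.
apply/seteqP; split => -[x y] /= [hq h]; split => //.
- apply: contrapT => hy.
  have y2 : 0 < y ^+ 2.
    by rewrite lt_def sqr_ge0 andbT sqrf_eq0; apply/eqP.
  have ha : 0 < (x - (1 - mu)) ^+ 2 + y ^+ 2.
    by have := sqr_ge0 (x - (1 - mu)); lra.
  have hb : 0 < (x - - mu) ^+ 2 + y ^+ 2.
    by have := sqr_ge0 (x - - mu); lra.
  rewrite dV_eq // in h.
  move/eqP: h; rewrite mulf_eq0 => /orP[/eqP y0|/eqP hF]; first exact: hy.
  have hF' : mu / (Num.sqrt ((x - (1 - mu)) ^+ 2 + y ^+ 2)) ^+ 3
      + (1 - mu) / (Num.sqrt ((x - - mu) ^+ 2 + y ^+ 2)) ^+ 3 = 1 by lra.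
  case: hq => -[hne1 [hne2 hV]] [M hM].
  pose f := fun s : R => ((x, y * s) : prod R^o R^o).
  pose Ray := f @` [set` `[(1:R), +oo[%R].
  have sub : Ray `<=` hill mu c.
    move=> _ [s /= hs <-]; rewrite /f.
    have s1 : 1 <= s by move: hs; rewrite in_itv /= andbT.
    have ys0 : y * s != 0 by rewrite mulf_neq0 //; [apply/eqP|rewrite gt_eqF // (lt_le_trans ltr01 s1)].
    split; first by case=> _ /eqP; rewrite (negPf ys0).
    split; first by case=> _ /eqP; rewrite (negPf ys0).
    rewrite V_eq; apply: le_trans hV; rewrite V_eq.
    apply: gV_le => //; try lra.
    rewrite exprMn -{1}[y ^+ 2]mulr1 ler_wpM2l ?sqr_ge0 //.
    by rewrite expr2; have := s1; nra.
  have conn : connected Ray.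
    have := @connected_continuous_connected R^o (prod R^o R^o) [set` `[(1:R), +oo[%R] f. move=> HH. apply: HH.
      exact/connected_intervalP/interval_is_interval.
    apply: continuous_subspaceT => s.
    have HP := @cvg_pair R^o R^o R^o (nbhs (s : R^o)) (nbhs (x : R^o)) (nbhs ((y * s) : R^o)) _ _ _ (fun _ => x) ( *%R y) (cvg_cst _) (@mulrl_continuous R y s).
    exact: HP.
  have Rq : Ray (x, y).
    by exists 1; [rewrite /= in_itv /= lexx|rewrite /f mulr1].
  have := connected_component_max Rq sub conn.
  move=> HR.
  pose s := 1 + `|M| / `|y|.
  have hs : Ray (x, y * s).
    exists s => //; rewrite /= in_itv /= andbT /s lerDl divr_ge0 //.
  have [_ /= hM2] := hM _ (HR _ hs).
  have ny : 0 < `|y| by rewrite normr_gt0; apply/eqP.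
  have s0 : 0 <= s by rewrite /s addr_ge0 // divr_ge0.
  have e : `|y * s| = `|y| + `|M|.
    rewrite normrM (ger0_norm s0) /s mulrDr mulr1 mulrCA divff ?gt_eqF // mulr1 //.
  move: hM2; rewrite e.
  have := ler_norm M; lra.
- rewrite /= in h; subst y.
  case: hq => -[hne1 [hne2 hV]] _.
  have hx : x - (1 - mu) != 0.
    by apply/eqP => e; apply: hne1; rewrite /prim_e; congr (_, _); lra.
  have hx' : x - - mu != 0.
    by apply/eqP => e; apply: hne2; rewrite /prim_s; congr (_, _); lra.
  rewrite dV_eq ?mul0r // expr0n /= addr0 lt_def sqr_ge0 andbT sqrf_eq0 //.
Qed.
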